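(* Consider a human–algorithm system (as defined in the context). If either $a_i\le h_i$ for all $i\in\{1,\dots,N\}$, or $a_i\ge h_i$ for all $i\in\{1,\dots,N\}$, then the system does not exhibit complementarity.
   Context: A human–algorithm system consists of: an integer $N\ge1$ (number of regimes); probabilities $p_1,\dots,p_N\ge 0$ with $\sum_i p_i=1$; algorithmic losses $a_1,\dots,a_N\ge 0$ and unaided-human losses $h_1,\dots,h_N\ge0$; and a combining function $c:[0,\infty)^2\to\mathbb{R}$ satisfying $\min(a,h)\le c(a,h)\le\max(a,h)$ for all $a,h\ge0$, where $c(a_i,h_i)$ is the loss of the combined system in regime $i$. Write $A=\sum_i p_i a_i$ and $H=\sum_i p_i h_i$. The system exhibits complementarity if $\sum_{i=1}^N p_i\,c(a_i,h_i)<\min(A,H)$. *)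

(* Defs.v *)
From mathcomp Require Import all_boot all_order all_algebra.
Set Implicit Arguments. Unset Strict Implicit. Unset Printing Implicit Defensive.
Import Order.TTheory GRing.Theory Num.Theory.
Local Open Scope ring_scope.

(* Regimes are indexed by 'I_N (i.e. {0,...,N-1} standing for {1,...,N}). *)

Definition expected_loss (R : realFieldType) (N : nat) (p x : 'I_N -> R) : R :=
  \sum_(i < N) p i * x i.

Definition combined_loss (R : realFieldType) (N : nat) (p a h : 'I_N -> R)
  (c : R -> R -> R) : R :=
  \sum_(i < N) p i * c (a i) (h i).

Definition complementarity (R : realFieldType) (N : nat) (p a h : 'I_N -> R)
  (c : R -> R -> R) : Prop :=
  combined_loss p a h c < Num.min (expected_loss p a) (expected_loss p h).

(* Main.v *)
Require Import Defs.
From mathcomp Require Import all_boot all_order all_algebra.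
Import Order.TTheory GRing.Theory Num.Theory.
Local Open Scope ring_scope.

Theorem lemma3 (R : realFieldType) (N : nat) (p a h : 'I_N -> R)
  (c : R -> R -> R)
  (hN : (1 <= N)%N)
  (hp0 : forall i, 0 <= p i)
  (hp1 : \sum_(i < N) p i = 1)
  (ha0 : forall i, 0 <= a i)
  (hh0 : forall i, 0 <= h i)
  (hc : forall x y : R, 0 <= x -> 0 <= y ->
          Num.min x y <= c x y /\ c x y <= Num.max x y)
  (hord : (forall i, a i <= h i) \/ (forall i, h i <= a i)) :
  ~ complementarity p a h c.
Proof.
rewrite /complementarity; apply/negP; rewrite -leNgt ge_min; apply/orP.
case: hord => H; [left|right]; rewrite /expected_loss /combined_loss;
  apply: ler_sum => i _; apply: ler_wpM2l => //;
  have [+ _] := hc _ _ (ha0 i) (hh0 i).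
- by rewrite (min_idPl (H i)).
- by rewrite (min_idPr (H i)).
Qed.
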